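(* Let $G$ be a tree on $k$ vertices, $n\ge 1$, $e=(s,t)$ an edge of $G$, and let $\{u,v\}$ be one of the two special edges $\{s^n,t^n\}$, $\{s^{n-1}t,\,t^{n-1}s\}$ of the unique $e$-cycle of length $2^n$ in $\Gamma^G_n$. Then $$n(u,v)\,n(v,u)=n_G(s,t)\,n_G(t,s)\,k^{2(n-1)}=n_G(s,t)k^{n-1}\left(k^n-n_G(s,t)k^{n-1}\right)=n_G(t,s)k^{n-1}\left(k^n-n_G(t,s)k^{n-1}\right),$$ where $n_G(s,t)$ is the number of vertices of $G$ closer to $s$ than to $t$.
   Context: Let $G=(V,E)$ be a finite tree with vertex set $V$ of size $k$, and fix an orientation of each edge, so that each edge becomes an ordered pair $e=(s,t)$. Each oriented edge $e=(s,t)$ acts on the set $V^*$ of finite words over the alphabet $V$ by the recursive rule: $e(\emptyset)=\emptyset$, $e(sw)=t\,e(w)$, $e(tw)=sw$, and $e(xw)=xw$ for $x\in V\setminus\{s,t\}$ (words are read left to right, $w\in V^*$). This action preserves word length. For $n\ge 1$, the Schreier graph $\Gamma_n^G$ is the multigraph with vertex set $V^n$ having, for each $u\in V^n$ and each oriented edge $e$ of $G$, one edge joining $u$ and $e(u)$, labelled $e$ (a loop if $e(u)=u$). The orbit of $s^n$ under $e$ is $\{s,t\}^n$, forming with its $e$-labelled edges the unique $e$-cycle of length $2^n$. For vertices $u,v$ of a graph $H$, $n(u,v)$ (resp. $n_G(u,v)$ in $G$) is the number of vertices strictly closer in graph distance to $u$ than to $v$. *)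

(* Defs.v *)
From mathcomp Require Import all_boot.
Set Implicit Arguments. Unset Strict Implicit. Unset Printing Implicit Defensive.

Section Defs.
Variable T : finType.

(* Graph distance for a (symmetric) adjacency relation r on a finite type:
   ball r m u = set of vertices reachable from u by a walk of length <= m;
   gdist r u v = least m with v in ball r m u (= #|T|.+1 if unreachable). *)
Definition nbhd (r : rel T) (A : {set T}) : {set T} :=
  A :|: [set y | [exists x in A, r x y]].
Definition ball (r : rel T) (m : nat) (u : T) : {set T} := iter m (nbhd r) [set u].
Definition gdist (r : rel T) (u v : T) : nat :=
  find (fun m => v \in ball r m u) (iota 0 #|T|.+1).

Definition ncloser (r : rel T) (u v : T) : nat :=
  #|[set w | gdist r u w < gdist r v w]|.
End Defs.

Section Tree.
Variable V : finType.
Definition undir (o : rel V) : rel V := fun x y => o x y || o y x.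

Definition oriented_tree (o : rel V) : Prop :=
  (forall x, ~~ o x x) /\
  (forall x y, o x y -> ~~ o y x) /\
  (forall x y, connect (undir o) x y) /\
  (forall c : seq V, uniq c -> 2 < size c -> ~~ cycle (undir o) c).

Fixpoint edge_act (s t : V) (w : seq V) : seq V :=
  match w with
  | [::] => [::]
  | x :: w' => if x == s then t :: edge_act s t w'
               else if x == t then s :: w'
               else x :: w'
  end.

(* Adjacency of the Schreier graph Gamma_n^G on V^n (loops/multiplicities
   are irrelevant for distances). *)
Definition schreier_adj (o : rel V) (n : nat) : rel (n.-tuple V) :=
  fun u v => [exists e : V * V, o e.1 e.2 &&
     ((edge_act e.1 e.2 u == v :> seq V) || (edge_act e.1 e.2 v == u :> seq V))].
End Tree.
Arguments schreier_adj {V} o n.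

(* Main.v *)
Require Import Defs.
From mathcomp Require Import all_boot.
From mathcomp Require Import zify.
Set Implicit Arguments. Unset Strict Implicit. Unset Printing Implicit Defensive.

Lemma mem_nbhd (T : finType) (r : rel T) A y :
  (y \in nbhd r A) = (y \in A) || [exists x in A, r x y].
Proof. by rewrite /nbhd in_setU inE. Qed.

Lemma ballS (T : finType) (r : rel T) m u : ball r m.+1 u = nbhd r (ball r m u).
Proof. by []. Qed.

Lemma ball0 (T : finType) (r : rel T) u : ball r 0 u = [set u].
Proof. by []. Qed.

Lemma ball_mono (T : finType) (r : rel T) m m' u :
  m <= m' -> {subset ball r m u <= ball r m' u}.
Proof.
move=> H; elim: m' H => [|m' IH]; first by rewrite leqn0 => /eqP ->.
rewrite leq_eqVlt => /orP [/eqP -> //|H] y Hy.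
rewrite ballS mem_nbhd; apply/orP; left; exact: IH.
Qed.

Lemma ball_center (T : finType) (r : rel T) m u : u \in ball r m u.
Proof. apply: (ball_mono (leq0n m)); by rewrite ball0 set11. Qed.

Lemma ball_step (T : finType) (r : rel T) m u x y :
  x \in ball r m u -> r x y -> y \in ball r m.+1 u.
Proof.
move=> Hx Hr; rewrite ballS mem_nbhd; apply/orP; right; apply/existsP; exists x.
by rewrite Hx.
Qed.

Lemma ball_inv (T : finType) (r : rel T) m u y :
  y \in ball r m.+1 u -> y \in ball r m u \/ exists x, x \in ball r m u /\ r x y.
Proof.
rewrite ballS mem_nbhd => /orP [H|/existsP [x /andP [H1 H2]]]; first by left.
right; by exists x.
Qed.

Lemma gdist_le (T : finType) (r : rel T) u w m :
  w \in ball r m u -> gdist r u w <= m.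
Proof.
move=> H; rewrite /gdist.
case: (leqP m #|T|) => Hm.
- rewrite leqNgt; apply/negP => Hlt.
  have := before_find 0 Hlt. rewrite nth_iota; last by rewrite ltnS.
  by rewrite add0n H.
- apply: leq_trans (find_size _ _) _. by rewrite size_iota.
Qed.

Lemma gdist_mem (T : finType) (r : rel T) u w :
  w \in ball r #|T| u -> w \in ball r (gdist r u w) u.
Proof.
move=> H.
have Hh : has (fun m => w \in ball r m u) (iota 0 #|T|.+1).
  apply/hasP; exists #|T|; last exact: H.
  by rewrite mem_iota add0n ltnS leqnn.
have := nth_find 0 Hh. rewrite nth_iota ?add0n //.
have := Hh; rewrite has_find size_iota; exact.
Qed.

Lemma path_ball (T : finType) (r : rel T) x p :
  path r x p -> last x p \in ball r (size p) x.
Proof.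
elim/last_ind: p => [|p z IH]; first by move=> _; exact: ball_center.
rewrite rcons_path last_rcons size_rcons => /andP [H1 H2].
exact: ball_step (IH H1) H2.
Qed.

Lemma connect_ball (T : finType) (r : rel T) x y :
  connect r x y -> y \in ball r #|T| x.
Proof.
move=> /connectP [p Hp ->].
case: (shortenP Hp) => p' Hp' Hu _.
apply: (ball_mono _ (path_ball Hp')).
move/card_uniqP: Hu => /= Hc.
have := max_card (mem (x :: p')). rewrite Hc /=. by move/ltnW.
Qed.

Lemma cross_lemma (T : finType) (r : rel T) (S : {set T}) u v p q :
  v \notin S ->
  (forall x w, r x w -> x \notin S -> w \in S -> (x = v /\ w = u) \/ (x = p /\ w = q)) ->
  (forall j, p \in ball r j v -> q \in ball r j u) ->
  forall j w, w \in S -> w \in ball r j v -> 0 < j /\ w \in ball r j.-1 u.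
Proof.
move=> Hv Hcr Hpq; elim=> [|j IH] w Hw.
- rewrite ball0 inE => /eqP Ew; by rewrite -Ew Hw in Hv.
- move/ball_inv => [Hb|[x [Hx Hxw]]]; split => //=.
  + have [_ H2] := IH w Hw Hb; exact: (ball_mono (leq_pred j) H2).
  + case Hxs: (x \in S).
    * have [Hj H2] := IH x Hxs Hx. have := ball_step H2 Hxw. by rewrite prednK.
    * move: (Hcr x w Hxw (negbT Hxs) Hw) => [[_ ->]|[Ex ->]]; first exact: ball_center.
      apply: Hpq; by rewrite -Ex.
Qed.

Lemma cross_gdist (T : finType) (r : rel T) (S : {set T}) u v p q :
  v \notin S ->
  (forall x w, r x w -> x \notin S -> w \in S -> (x = v /\ w = u) \/ (x = p /\ w = q)) ->
  (forall j, p \in ball r j v -> q \in ball r j u) ->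
  (forall w, w \in ball r #|T| v) ->
  forall w, w \in S -> gdist r u w < gdist r v w.
Proof.
move=> Hv Hcr Hpq Hc w Hw.
have [Hj Hb] := cross_lemma Hv Hcr Hpq Hw (gdist_mem (Hc w)).
apply: leq_ltn_trans (gdist_le Hb) _. by rewrite prednK.
Qed.

Lemma cross_ncloser (T : finType) (r : rel T) (S : {set T}) u v p q :
  u \in S -> v \notin S ->
  (forall x w, r x w -> x \notin S -> w \in S -> (x = v /\ w = u) \/ (x = p /\ w = q)) ->
  (forall x w, r x w -> x \in S -> w \notin S -> (x = u /\ w = v) \/ (x = q /\ w = p)) ->
  (forall j, p \in ball r j v -> q \in ball r j u) ->
  (forall j, q \in ball r j u -> p \in ball r j v) ->
  (forall w, w \in ball r #|T| v) ->
  (forall w, w \in ball r #|T| u) ->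
  ncloser r u v = #|S| /\ ncloser r v u = #|~: S|.
Proof.
move=> Hu Hv Hc1 Hc2 H1 H2 Cv Cu.
have A1 := cross_gdist Hv Hc1 H1 Cv.
have Hu' : u \notin ~: S by rewrite inE Hu.
have A2 : forall w, w \in ~: S -> gdist r v w < gdist r u w.
  apply: (cross_gdist Hu' _ H2 Cu) => x w Hr; rewrite !inE negbK => Hx Hw.
  exact: Hc2.
rewrite /ncloser; split; apply: eq_card => w; rewrite inE.
- case Hw: (w \in S); first by rewrite A1.
  have := A2 w; rewrite inE Hw => /(_ isT) H. apply/negbTE; rewrite -leqNgt; exact: ltnW.
- rewrite inE. case Hw: (w \in S) => /=; last by rewrite A2 // inE Hw.
  have := A1 w Hw => H. apply/negbTE; rewrite -leqNgt; exact: ltnW.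
Qed.

Definition rmE (V : finType) (o : rel V) (s t : V) : rel V :=
  fun x y => undir o x y && ~~ ((x == s) && (y == t) || (x == t) && (y == s)).
Definition SG (V : finType) (o : rel V) (s t : V) : {set V} :=
  [set y | connect (rmE o s t) s y].

Lemma undir_sym (V : finType) (o : rel V) : symmetric (undir o).
Proof. move=> x y; by rewrite /undir orbC. Qed.

Lemma rmE_sym (V : finType) (o : rel V) s t : symmetric (rmE o s t).
Proof.
move=> x y; rewrite /rmE undir_sym.
by case: (x == s); case: (y == t); case: (x == t); case: (y == s); rewrite ?orbF ?andbF.
Qed.

Lemma s_in_SG (V : finType) (o : rel V) s t : s \in SG o s t.
Proof. by rewrite inE connect0. Qed.

Lemma t_notin_SG (V : finType) (o : rel V) s t :
  oriented_tree o -> o s t -> t \notin SG o s t.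
Proof.
move=> [Hirr [Has [Hc Hcyc]]] Hst; rewrite inE; apply/negP.
move/connectP => [p Hp].
case: (shortenP Hp) => p' Hp' Hu _ Et.
have Hsub : subrel (rmE o s t) (undir o) by move=> x y /andP [].
case: p' Hp' Hu Et => [|y1 [|y2 rest]].
- move=> _ _ /= Et; by rewrite Et (negbTE (Hirr s)) in Hst.
- move=> /= /andP [H _] _ Et; subst y1.
  by move: H; rewrite /rmE !eqxx /= andbF.
- move=> Hpath Hu Et.
  have := Hcyc (s :: y1 :: y2 :: rest) Hu isT.
  rewrite /cycle rcons_path (sub_path Hsub Hpath) -Et.
  by rewrite /undir Hst orbT.
Qed.

Lemma G_cross (V : finType) (o : rel V) s t x y :
  undir o x y -> (x \in SG o s t) != (y \in SG o s t) ->
  (x = s /\ y = t) \/ (x = t /\ y = s).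
Proof.
move=> Hxy Hd.
case Hr: (rmE o s t x y).
- exfalso; move: Hd; rewrite !inE.
  have Hcs := sym_connect_sym (rmE_sym o s t).
  case Hx: (connect _ s x); case Hy: (connect _ s y) => //= _.
  + by rewrite (connect_trans Hx (connect1 Hr)) in Hy.
  + rewrite rmE_sym in Hr. by rewrite (connect_trans Hy (connect1 Hr)) in Hx.
- move: Hr; rewrite /rmE Hxy /= => /negbFE /orP [/andP [/eqP -> /eqP ->]|/andP [/eqP -> /eqP ->]].
  + by left. + by right.
Qed.

Lemma G_part (V : finType) (o : rel V) s t :
  oriented_tree o -> o s t ->
  ncloser (undir o) s t = #|SG o s t| /\ ncloser (undir o) t s = #|~: SG o s t|.
Proof.
move=> Ht Hst.
have Hs := s_in_SG o s t. have Htn := t_notin_SG Ht Hst.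
have Hconn : forall x w, w \in ball (undir o) #|V| x.
  move=> x w; apply: connect_ball; by case: Ht => [_ [_ [Hc _]]].
apply: (@cross_ncloser _ _ _ s t t s) => //.
- move=> x w Hr Hx Hw.
  have Hd : (x \in SG o s t) != (w \in SG o s t) by rewrite (negbTE Hx) Hw.
  have [[E1 E2]|[E1 E2]] := G_cross Hr Hd.
  + by rewrite E1 Hs in Hx.
  + by left.
- move=> x w Hr Hx Hw.
  have Hd : (x \in SG o s t) != (w \in SG o s t) by rewrite (negbTE Hw) Hx.
  have [[E1 E2]|[E1 E2]] := G_cross Hr Hd.
  + by left.
  + by rewrite E1 (negbTE Htn) in Hx.
- move=> j _; exact: ball_center.
- move=> j _; exact: ball_center.
Qed.


Lemma size_ea (V : finType) (a b : V) w : size (edge_act a b w) = size w.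
Proof.
elim: w => //= x w IH.
by case: (x == a) => /=; [rewrite IH | case: (x == b)].
Qed.

Definition act1 (V : finType) (a b y : V) := if y == a then b else if y == b then a else y.

Lemma last_ne (V : eqType) (d1 d2 : V) (w : seq V) : w != [::] -> last d1 w = last d2 w.
Proof. by case: w. Qed.

Lemma ea_last (V : finType) (a b x0 : V) m z :
  size z = m.+1 ->
  last x0 (edge_act a b z) = last x0 z \/
  (z = rcons (nseq m a) (last x0 z) /\
   edge_act a b z = rcons (nseq m b) (act1 a b (last x0 z))).
Proof.
elim: m z => [|m IH] z.
- case: z => [|y [|]] //= _. right; split => //.
  by rewrite /act1; case: (y == a) => //; case: (y == b).
- case: z => [|x z] //= [Hs].
  have Hne : z != [::] by rewrite -size_eq0 Hs.
  have Hne' : edge_act a b z != [::] by rewrite -size_eq0 size_ea Hs.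
  case: (x =P a) => [->|Hxa].
  + rewrite /=; try rewrite eqxx.
    have [H|[H1 H2]] := IH z Hs.
    * left; by rewrite (last_ne b x0 Hne') (last_ne a x0 Hne) H.
    * right; rewrite (last_ne a x0 Hne); split.
      - by rewrite {1}H1.
      - by rewrite H2.
  + idtac.
    case: (x == b); left => /=; exact: last_ne.
Qed.

Lemma rcons_nseq_same (V : Type) m (c : V) : rcons (nseq m c) c = nseq m.+1 c.
Proof. by elim: m => //= m ->. Qed.


Lemma key_cross (V : finType) (o : rel V) s t a b m z :
  oriented_tree o -> o s t -> o a b -> size z = m.+1 ->
  (last s (edge_act a b z) \in SG o s t) != (last s z \in SG o s t) ->
  a = s /\ b = t /\
  ((z = rcons (nseq m s) s /\ edge_act a b z = rcons (nseq m t) t) \/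
   (z = rcons (nseq m s) t /\ edge_act a b z = rcons (nseq m t) s)).
Proof.
move=> Ht Hst Hab Hs Hd.
have [H|[H1 H2]] := ea_last a b s Hs; first by rewrite H eqxx in Hd.
move: Hd; rewrite H2 last_rcons.
set l := last s z in H1 H2 *.
have Hasym := (proj1 (proj2 Ht)).
have Hab' : undir o a b by rewrite /undir Hab.
have ab_st : (a \in SG o s t) != (b \in SG o s t) -> a = s /\ b = t.
  move=> D; have [[-> ->]|[Ea Eb]] := G_cross Hab' D => //.
  by rewrite Ea Eb (negbTE (Hasym _ _ Hst)) in Hab.
case: (l =P a) => [El|Nla].
- rewrite /act1 El eqxx => D; have [Ea Eb] : a = s /\ b = t by apply: ab_st; rewrite eq_sym.
  split => //; split => //; left.
  by rewrite H1 El Ea Eb.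
- case: (l =P b) => [El|Nlb]; last first.
    rewrite /act1; have -> : (l == a) = false by apply/eqP.
    have -> : (l == b) = false by apply/eqP. by rewrite eqxx.
  have Nba : (b == a) = false by apply/eqP => E; apply: Nla; rewrite El E.
  rewrite /act1 El Nba eqxx => D; have [Ea Eb] := ab_st D.
  split => //; split => //; right.
  by rewrite H1 El Ea Eb.
Qed.


Definition Ut (V : finType) m (s : V) : m.+1.-tuple V := nseq_tuple m.+1 s.
Definition Pt (V : finType) m (s t : V) : m.+1.-tuple V := rcons_tuple (nseq_tuple m s) t.
Definition Sn (V : finType) (o : rel V) m (s t : V) : {set m.+1.-tuple V} :=
  [set w : m.+1.-tuple V | last s w \in SG o s t].

Lemma in_Sn (V : finType) (o : rel V) m (s t : V) (w : m.+1.-tuple V) :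
  (w \in Sn o m s t) = (last s w \in SG o s t).
Proof. by rewrite /Sn in_set. Qed.

Lemma Gn_cross (V : finType) (o : rel V) m s t (x w : m.+1.-tuple V) :
  oriented_tree o -> o s t -> schreier_adj o m.+1 x w ->
  x \notin Sn o m s t -> w \in Sn o m s t ->
  (x = Ut m t /\ w = Ut m s) \/ (x = Pt m s t /\ w = Pt m t s).
Proof.
move=> Ht Hst /existsP [[a b] /= /andP [Hab /orP [/eqP E|/eqP E]]]; rewrite !in_Sn => Hx Hw.
- have Hd : (last s (edge_act a b x) \in SG o s t) != (last s x \in SG o s t).
    by rewrite E Hw (negbTE Hx).
  have [_ [_ [[H1 H2]|[H1 H2]]]] := key_cross Ht Hst Hab (size_tuple x) Hd.
  + by rewrite H1 last_rcons s_in_SG in Hx.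
  + right; split; apply: val_inj => //=. by rewrite -E H2.
- have Hd : (last s (edge_act a b w) \in SG o s t) != (last s w \in SG o s t).
    by rewrite E Hw (negbTE Hx).
  have [_ [_ [[H1 H2]|[H1 H2]]]] := key_cross Ht Hst Hab (size_tuple w) Hd.
  + left; split; apply: val_inj => /=.
    * by rewrite -E H2 rcons_nseq_same.
    * by rewrite H1 rcons_nseq_same.
  + by rewrite H1 last_rcons (negbTE (t_notin_SG Ht Hst)) in Hw.
Qed.

Lemma adj_sym (V : finType) (o : rel V) n : symmetric (schreier_adj o n).
Proof.
move=> x y; rewrite /schreier_adj; apply/existsP/existsP => [] [e He]; exists e;
  by rewrite orbC.
Qed.


Fixpoint Fp (V : finType) (A : {set V}) (s t : V) (w : seq V) : bool * nat :=
  match w with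
  | [::] => (false, 0)
  | x :: w' =>
    if (Fp A s t w').1 then (true, odd (Fp A s t w').2 + 2 * (Fp A s t w').2)
    else ((x != s) && (x != t), (x \in A) + 2 * (Fp A s t w').2)
  end.

Lemma Fp_bound (V : finType) (A : {set V}) s t w : (Fp A s t w).2 < 2 ^ size w.
Proof.
elim: w => //= x w IH; rewrite expnS.
case: (Fp A s t w).1 => /=.
- have := leq_b1 (odd (Fp A s t w).2). lia.
- have := leq_b1 (x \in A). lia.
Qed.

Lemma odd_b2 (b : bool) v : odd (b + 2 * v) = b.
Proof. by rewrite oddD mul2n odd_double addbF; case: b. Qed.

Lemma Fp_inv (V : finType) (A : {set V}) s t a b w :
  (a \in A) = (b \in A) ->
  (Fp A s t (edge_act a b w)).2 = (Fp A s t w).2 /\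
  ((Fp A s t (edge_act a b w)).1 != (Fp A s t w).1 -> odd (Fp A s t w).2 = (a \in A)).
Proof.
move=> Hab; elim: w => [|x w [IH1 IH2]] //=.
case: (x =P a) => [Exa|Nxa] /=.
{ move: IH1 IH2; case: (Fp A s t (edge_act a b w)) => [f' v'];
  case: (Fp A s t w) => [f v] /= -> H2.
  rewrite Exa; case: f' f H2 => [] [] /= H2; split.
  all: try by rewrite ?(H2 isT) ?Hab.
  all: move=> Hne; rewrite odd_b2 //; by apply: H2; move: Hne. }
- case: (x =P b) => [Exb|Nxb] /=.
  + case: (Fp A s t w) => [f0 v0] /=.
    case: f0 => /=; first by [].
    rewrite Exb Hab; split => //; by rewrite odd_b2.
    by split => //; rewrite eqxx.
Qed.

Lemma Fp_e (V : finType) (A : {set V}) s t w :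
  s \in A -> t \notin A -> s != t ->
  (Fp A s t (edge_act s t w)).1 = (Fp A s t w).1 /\
  ((Fp A s t w).1 -> (Fp A s t (edge_act s t w)).2 = (Fp A s t w).2) /\
  (~~ (Fp A s t w).1 -> (Fp A s t (edge_act s t w)).2 = ((Fp A s t w).2 + 1) %% 2 ^ size w).
Proof.
move=> HsA HtA Hst; elim: w => [|x w [IH1 [IH2 IH3]]] //=.
have Hb := Fp_bound A s t w.
have Hts : (t == s) = false by apply/eqP => E; rewrite E eqxx in Hst.
rewrite expnS.
case: (x =P s) => [->|Nxs] /=.
- move: IH1 IH2 IH3 Hb; case: (Fp A s t (edge_act s t w)) => [f' v'];
  case: (Fp A s t w) => [f v] /= -> IH2 IH3 Hb.
  case: f IH2 IH3 => /= IH2 IH3.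
  + by rewrite (IH2 isT).
  + rewrite !eqxx Hts (negbTE HtA) HsA /= (IH3 isT); split => //; split => // _.
    have [Hlt|Heq] : v.+1 < 2 ^ size w \/ v.+1 = 2 ^ size w by lia.
    * rewrite !modn_small; lia.
    * rewrite addn1 Heq modnn.
      have -> : 1 + 2 * v + 1 = 2 * 2 ^ size w by lia.
      by rewrite modnn.
- case: (x =P t) => [->|Nxt] /=.
  + move: Hb; case: (Fp A s t w) => [f v] /= Hb.
    case: f => //=. rewrite ?eqxx ?Hts /= ?andbF (negbTE HtA) HsA; split => //; split => // _.
    rewrite modn_small; lia.
  + move: Hb; case: (Fp A s t w) => [f v] /= Hb.
    have -> : (x != s) && (x != t) by apply/andP; split; apply/eqP.
    by case: f.
Qed.


Definition cd (M a b : nat) := minn ((a - b) + (b - a)) (M - ((a - b) + (b - a))).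

Lemma cd_sym M a b : cd M a b = cd M b a.
Proof. rewrite /cd; lia. Qed.

Lemma cd_tri M a b c : a < M -> b < M -> c < M -> cd M a c <= cd M a b + cd M b c.
Proof. rewrite /cd; lia. Qed.

Lemma ea_cd (V : finType) (o : rel V) s t a b (z : seq V) :
  oriented_tree o -> o s t -> o a b ->
  cd (2 ^ size z) (Fp (SG o s t) s t z).2 (Fp (SG o s t) s t (edge_act a b z)).2 <= 1.
Proof.
move=> Ht Hst Hab.
have Hb := Fp_bound (SG o s t) s t z.
case: (boolP ((a == s) && (b == t))) => [/andP [/eqP Ea /eqP Eb]|Nab].
- rewrite Ea Eb.
  have Hsn : s != t by apply/eqP => E; rewrite E in Hst; case: Ht => H _; by rewrite (negbTE (H t)) in Hst.
  have [_ [H2 H3]] := Fp_e z (s_in_SG o s t) (t_notin_SG Ht Hst) Hsn.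
  move: H2 H3 Hb; case: (Fp _ s t z) => [f v] /= H2 H3 Hb.
  case: f H2 H3 => /= H2 H3.
  + rewrite H2 // /cd; lia.
  + rewrite H3 //.
    have [Hlt|Heq] : v.+1 < 2 ^ size z \/ v.+1 = 2 ^ size z by lia.
    * rewrite modn_small; rewrite /cd; lia.
    * rewrite addn1 Heq modnn /cd; lia.
- have Hside : (a \in SG o s t) = (b \in SG o s t).
    apply/eqP; apply/negP => /negP D.
    have Hu : undir o a b by rewrite /undir Hab.
    have [[Ea Eb]|[Ea Eb]] := G_cross Hu D.
    + by rewrite Ea Eb !eqxx in Nab.
    + case: Ht => _ [Has _]. by rewrite Ea Eb (negbTE (Has _ _ Hst)) in Hab.
  have [H1 _] := Fp_inv s t z Hside.
  rewrite H1 /cd; lia.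
Qed.

Definition Fv (V : finType) (o : rel V) s t n (w : n.-tuple V) := (Fp (SG o s t) s t w).2.

Lemma Fv_bound (V : finType) (o : rel V) s t n (w : n.-tuple V) : Fv o s t w < 2 ^ n.
Proof. by have := Fp_bound (SG o s t) s t w; rewrite size_tuple. Qed.

Lemma adj_cd (V : finType) (o : rel V) s t n (x y : n.-tuple V) :
  oriented_tree o -> o s t -> schreier_adj o n x y ->
  cd (2 ^ n) (Fv o s t x) (Fv o s t y) <= 1.
Proof.
move=> Ht Hst /existsP [[a b] /= /andP [Hab /orP [/eqP E|/eqP E]]].
- have := ea_cd (val x) Ht Hst Hab. by rewrite E size_tuple.
- have := ea_cd (val y) Ht Hst Hab. by rewrite E size_tuple cd_sym.
Qed.

Lemma lip (V : finType) (o : rel V) s t n (x : n.-tuple V) j :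
  oriented_tree o -> o s t -> forall y, y \in ball (schreier_adj o n) j x ->
  cd (2 ^ n) (Fv o s t x) (Fv o s t y) <= j.
Proof.
move=> Ht Hst; elim: j => [|j IH] y.
- rewrite ball0 inE => /eqP ->; rewrite /cd; lia.
- move/ball_inv => [H|[z [Hz Hzy]]].
  + have := IH y H; lia.
  + have H1 := IH z Hz. have H2 := adj_cd Ht Hst Hzy.
    have := cd_tri (Fv_bound o s t x) (Fv_bound o s t z) (Fv_bound o s t y).
    lia.
Qed.


Fixpoint binw (V : Type) (s t : V) (n i : nat) : seq V :=
  if n is n'.+1 then (if odd i then s else t) :: binw s t n' i./2 else [::].

Lemma size_binw (V : Type) (s t : V) n i : size (binw s t n i) == n.
Proof. by elim: n i => //= n IH i; rewrite eqSS IH. Qed.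

Definition bint (V : Type) (s t : V) n i : n.-tuple V := Tuple (size_binw s t n i).

Lemma binw_cons (V : Type) (s t : V) n (b : bool) j :
  binw s t n.+1 (b + j.*2) = (if b then s else t) :: binw s t n j.
Proof. by rewrite /= half_bit_double oddD odd_double addbF; case: b. Qed.

Lemma ea_binw (V : finType) (s t : V) n i : s != t -> i.+1 < 2 ^ n ->
  edge_act s t (binw s t n i) = binw s t n i.+1.
Proof.
move=> Hst; elim: n i => [|n IH] i; first by rewrite expn0.
rewrite expnS => Hi.
have Hts : (t == s) = false by apply/eqP => E; rewrite E eqxx in Hst.
set h := i./2.
have Ei : i = odd i + h.*2 by rewrite odd_double_half.
case: (odd i) Ei => Ei; rewrite Ei.
- rewrite (_ : (true + h.*2).+1 = false + h.+1.*2); last by rewrite doubleS.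
  rewrite !binw_cons /= eqxx IH //. rewrite -muln2 in Ei. lia.
- rewrite (_ : (false + h.*2).+1 = true + h.*2) // !binw_cons /= Hts eqxx //.
Qed.

Lemma adj_bin (V : finType) (o : rel V) s t n i :
  oriented_tree o -> o s t -> i.+1 < 2 ^ n ->
  schreier_adj o n (bint s t n i) (bint s t n i.+1).
Proof.
move=> Ht Hst Hi; apply/existsP; exists (s, t); rewrite /= Hst /=.
apply/orP; left; apply/eqP; apply: ea_binw => //.
apply/eqP => E; rewrite E in Hst; case: Ht => H _; by rewrite (negbTE (H t)) in Hst.
Qed.

Lemma path_fwd (V : finType) (o : rel V) s t n :
  oriented_tree o -> o s t -> forall j i, i + j < 2 ^ n ->
  bint s t n (i + j) \in ball (schreier_adj o n) j (bint s t n i).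
Proof.
move=> Ht Hst; elim => [|j IH] i Hij; first by rewrite addn0; exact: ball_center.
apply: (@ball_step _ _ _ _ (bint s t n (i + j))).
- apply: IH; lia.
- rewrite addnS; apply: adj_bin => //; lia.
Qed.

Lemma path_bwd (V : finType) (o : rel V) s t n :
  oriented_tree o -> o s t -> forall j i, i + j < 2 ^ n ->
  bint s t n i \in ball (schreier_adj o n) j (bint s t n (i + j)).
Proof.
move=> Ht Hst; elim => [|j IH] i Hij; first by rewrite addn0; exact: ball_center.
apply: (@ball_step _ _ _ _ (bint s t n i.+1)).
- rewrite -addSnnS; apply: IH; lia.
- rewrite adj_sym; apply: adj_bin => //; lia.
Qed.

Lemma binw0 (V : Type) (s t : V) n : binw s t n 0 = nseq n t.
Proof. by elim: n => //= n ->. Qed.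

Lemma binw_max (V : Type) (s t : V) n : binw s t n (2 ^ n - 1) = nseq n s.
Proof.
elim: n => // n IH.
have E : 2 ^ n.+1 - 1 = true + (2 ^ n - 1).*2.
  rewrite -muln2 expnS; have := expn_gt0 2 n; lia.
by rewrite E binw_cons IH.
Qed.

Lemma binw_P (V : Type) (s t : V) m : binw s t m.+1 (2 ^ m - 1) = rcons (nseq m s) t.
Proof.
elim: m => // m IH.
have E : 2 ^ m.+1 - 1 = true + (2 ^ m - 1).*2.
  rewrite -muln2 expnS; have := expn_gt0 2 m; lia.
by rewrite E binw_cons IH.
Qed.

Lemma binw_Q (V : Type) (s t : V) m : binw s t m.+1 (2 ^ m) = rcons (nseq m t) s.
Proof.
elim: m => // m IH.
have E : 2 ^ m.+1 = false + (2 ^ m).*2 by rewrite -muln2 expnS; lia.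
by rewrite E binw_cons IH.
Qed.

Lemma Fp_rn (V : finType) (A : {set V}) s t m c d :
  c \in [:: s; t] -> d \in [:: s; t] ->
  Fp A s t (rcons (nseq m c) d) = (false, (c \in A) * (2 ^ m - 1) + (d \in A) * 2 ^ m).
Proof.
move=> Hc Hd.
have Hfc : (c != s) && (c != t) = false.
  by move: Hc; rewrite !inE => /orP [/eqP ->|/eqP ->]; rewrite eqxx ?andbF.
have Hfd : (d != s) && (d != t) = false.
  by move: Hd; rewrite !inE => /orP [/eqP ->|/eqP ->]; rewrite eqxx ?andbF.
elim: m => [|m IH] /=; first (rewrite Hfd; congr (_, _); rewrite expn0; lia).
rewrite IH /= Hfc; congr (_, _).
rewrite expnS; have := expn_gt0 2 m.
case: (c \in A); case: (d \in A) => /=; lia.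
Qed.


Lemma connect_map (T1 T2 : finType) (e1 : rel T1) (e2 : rel T2) (f : T1 -> T2) :
  (forall x y, e1 x y -> connect e2 (f x) (f y)) ->
  forall x y, connect e1 x y -> connect e2 (f x) (f y).
Proof.
move=> H x y /connectP [p Hp ->].
elim: p x Hp => [|z p IH] x /=; first by move=> _; exact: connect0.
move=> /andP [H1 H2]; exact: connect_trans (H _ _ H1) (IH _ H2).
Qed.

Lemma adj_first (V : finType) (o : rel V) n (w : n.-tuple V) x y :
  oriented_tree o -> undir o x y ->
  schreier_adj o n.+1 (cons_tuple x w) (cons_tuple y w).
Proof.
move=> [Hirr _] /orP [Hxy|Hyx]; apply/existsP.
- exists (x, y); rewrite /= Hxy /=; apply/orP; right.
  have -> : (y == x) = false by apply/eqP => E; rewrite E (negbTE (Hirr x)) in Hxy.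
  by rewrite eqxx.
- exists (y, x); rewrite /= Hyx /=; apply/orP; left.
  have -> : (x == y) = false by apply/eqP => E; rewrite E (negbTE (Hirr y)) in Hyx.
  by rewrite eqxx.
Qed.

Lemma conn_first (V : finType) (o : rel V) n (w : n.-tuple V) x y :
  oriented_tree o -> connect (schreier_adj o n.+1) (cons_tuple x w) (cons_tuple y w).
Proof.
move=> Ht.
apply: (@connect_map _ _ (undir o) _ (fun z => cons_tuple z w)).
- move=> a b H; apply: connect1; exact: adj_first.
- by case: Ht => [_ [_ [Hc _]]].
Qed.

Lemma adj_lift1 (V : finType) (o : rel V) n (w w' : n.-tuple V) c a b :
  oriented_tree o -> o a b -> edge_act a b w = w' ->
  connect (schreier_adj o n.+1) (cons_tuple c w) (cons_tuple c w').
Proof.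
move=> Ht Hab E.
apply: (connect_trans (conn_first w c a Ht)).
have H1 : connect (schreier_adj o n.+1) (cons_tuple a w) (cons_tuple b w').
  apply: connect1; apply/existsP; exists (a, b); rewrite /= Hab /=.
  by apply/orP; left; rewrite eqxx E.
exact: connect_trans H1 (conn_first w' b c Ht).
Qed.

Lemma conn_n (V : finType) (o : rel V) n (x y : n.-tuple V) :
  oriented_tree o -> connect (schreier_adj o n) x y.
Proof.
move=> Ht; elim: n x y => [|n IH] x y.
- rewrite (tuple0 x) (tuple0 y); exact: connect0.
- have eta : forall z : n.+1.-tuple V, z = cons_tuple (thead z) (behead_tuple z).
    move=> [[|a l] Hs] //. by apply: val_inj.
  rewrite (eta x) (eta y).
  have H2 := conn_first (behead_tuple y) (thead x) (thead y) Ht.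
  apply: connect_trans H2.
  apply: (@connect_map _ _ (schreier_adj o n) _ (fun z => cons_tuple (thead x) z)); last exact: IH.
  move=> a b /existsP [[a' b'] /= /andP [Hab /orP [/eqP E|/eqP E]]].
  + exact: adj_lift1 Ht Hab E.
  + rewrite (sym_connect_sym (@adj_sym V o n.+1)). exact: adj_lift1 Ht Hab E.
Qed.

Lemma card_last (V : finType) m (A : {set V}) (x0 : V) :
  #|[set w : m.+1.-tuple V | last x0 w \in A]| = #|A| * #|V| ^ m.
Proof.
have -> : [set w : m.+1.-tuple V | last x0 w \in A] =
          (fun p : m.-tuple V * V => rcons_tuple p.1 p.2) @: setX [set: m.-tuple V] A.
  apply/setP => w; rewrite in_set; apply/idP/imsetP.
  - case: w => sw Hsw /= Hl.
    case/lastP: sw Hsw Hl => [|sb y] Hsw Hl; first by [].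
    have Hsb : size sb == m by rewrite size_rcons eqSS in Hsw.
    exists (Tuple Hsb, y); first by rewrite inE /= in_setT; rewrite last_rcons in Hl.
    by apply: val_inj.
  - move=> [[tb y]]; rewrite inE /= => /andP [_ Hy] ->. by rewrite /= last_rcons.
rewrite card_imset; last first.
  move=> [t1 y1] [t2 y2] /(congr1 val) /= /rcons_inj [E1 ->]; congr (_, _); exact: val_inj.
by rewrite cardsX cardsT card_tuple mulnC.
Qed.


Lemma ball_exact (V : finType) (o : rel V) s t n (X Y : n.-tuple V) K :
  oriented_tree o -> o s t -> cd (2 ^ n) (Fv o s t X) (Fv o s t Y) = K ->
  Y \in ball (schreier_adj o n) K X ->
  forall j, (Y \in ball (schreier_adj o n) j X) = (K <= j).
Proof.
move=> Ht Hst Hcd Hin j; apply/idP/idP => H.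
- rewrite -Hcd; exact: lip Ht Hst _ H.
- by apply: (ball_mono H).
Qed.

Lemma last_nseqS (V : Type) (d c : V) n : last d (nseq n.+1 c) = c.
Proof. by elim: n => //= n. Qed.

Lemma num1 m : [/\ 0 + (2 ^ m - 1) < 2 ^ m.+1, 2 ^ m + (2 ^ m - 1) < 2 ^ m.+1 &
  2 ^ m + (2 ^ m - 1) = 2 ^ m.+1 - 1].
Proof. rewrite expnS; have := expn_gt0 2 m; split; lia. Qed.

Lemma num2 m : [/\ cd (2 ^ m.+1) 0 (2 ^ m - 1) = 2 ^ m - 1, cd (2 ^ m.+1) (2 ^ m - 1) 0 = 2 ^ m - 1,
  cd (2 ^ m.+1) (2 ^ m) (2 ^ m - 1 + 2 ^ m) = 2 ^ m - 1 &
  cd (2 ^ m.+1) (2 ^ m - 1 + 2 ^ m) (2 ^ m) = 2 ^ m - 1].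
Proof. rewrite expnS /cd; have := expn_gt0 2 m; split; lia. Qed.

Lemma main_n (V : finType) (o : rel V) m s t :
  oriented_tree o -> o s t ->
  let r := schreier_adj o m.+1 in
  let S := Sn o m s t in
  [/\ ncloser r (Ut m s) (Ut m t) = #|S|, ncloser r (Ut m t) (Ut m s) = #|~: S|,
      ncloser r (Pt m s t) (Pt m t s) = #|~: S| & ncloser r (Pt m t s) (Pt m s t) = #|S|].
Proof.
move=> Ht Hst r S.
set U := Ut m s. set W := Ut m t. set P := Pt m s t. set Q := Pt m t s.
have HsG := s_in_SG o s t. have HtG := t_notin_SG Ht Hst.
have lastU : forall c : V, last s (Ut m c) = c.
  by move=> c; exact: last_nseqS.
have US : U \in S by rewrite in_Sn lastU.
have WS : W \notin S by rewrite in_Sn lastU.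
have PS : P \notin S by rewrite in_Sn /= last_rcons.
have QS : Q \in S by rewrite in_Sn /= last_rcons.
have Hc1 : forall x w, r x w -> x \notin S -> w \in S -> (x = W /\ w = U) \/ (x = P /\ w = Q).
  move=> x w H Hx Hw; exact: Gn_cross Ht Hst H Hx Hw.
have Hc2 : forall x w, r x w -> x \in S -> w \notin S -> (x = U /\ w = W) \/ (x = Q /\ w = P).
  move=> x w H Hx Hw. rewrite /r adj_sym in H.
  have [[-> ->]|[-> ->]] := Gn_cross Ht Hst H Hw Hx; [by left | by right].
have mem2 : forall c, c \in [:: s; t] -> c \in [:: s; t] by [].
have Hs2 : s \in [:: s; t] by rewrite inE eqxx.
have Ht2 : t \in [:: s; t] by rewrite !inE eqxx orbT.
have FU : Fv o s t U = (2 ^ m - 1) + 2 ^ m.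
  rewrite /Fv (_ : (U : seq V) = rcons (nseq m s) s); last by rewrite rcons_nseq_same.
  by rewrite Fp_rn //= HsG ?mul1n.
have FW : Fv o s t W = 0.
  rewrite /Fv (_ : (W : seq V) = rcons (nseq m t) t); last by rewrite rcons_nseq_same.
  by rewrite Fp_rn //= (negbTE HtG) ?mul0n.
have FP : Fv o s t P = 2 ^ m - 1.
  by rewrite /Fv Fp_rn //= HsG (negbTE HtG) ?mul1n ?mul0n ?addn0 ?add0n.
have FQ : Fv o s t Q = 2 ^ m.
  by rewrite /Fv Fp_rn //= HsG (negbTE HtG) ?mul1n ?mul0n ?addn0 ?add0n.
have [N1 N2 N3] := num1 m.
have [C1 C2 C3 C4] := num2 m.
have EW : W = bint s t m.+1 0 by apply: val_inj; exact: (esym (binw0 s t m.+1)).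
have EP : P = bint s t m.+1 (0 + (2 ^ m - 1)) by rewrite add0n; apply: val_inj; exact: (esym (binw_P s t m)).
have EQ : Q = bint s t m.+1 (2 ^ m) by apply: val_inj; exact: (esym (binw_Q s t m)).
have EU : U = bint s t m.+1 (2 ^ m + (2 ^ m - 1)).
  apply: val_inj; rewrite (_ : 2 ^ m + (2 ^ m - 1) = 2 ^ m.+1 - 1); last exact: N3.
  exact: (esym (binw_max s t m.+1)).
have cWP : cd (2 ^ m.+1) (Fv o s t W) (Fv o s t P) = 2 ^ m - 1.
  by rewrite FW FP.
have bWP : P \in ball r (2 ^ m - 1) W.
  rewrite EW EP; apply: (@path_fwd _ o s t m.+1 Ht Hst (2 ^ m - 1) 0 N1).
have eWP := ball_exact Ht Hst cWP bWP.
have cPW : cd (2 ^ m.+1) (Fv o s t P) (Fv o s t W) = 2 ^ m - 1.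
  by rewrite FW FP.
have bPW : W \in ball r (2 ^ m - 1) P.
  rewrite EP EW; apply: (@path_bwd _ o s t m.+1 Ht Hst (2 ^ m - 1) 0 N1).
have ePW := ball_exact Ht Hst cPW bPW.
have cQU : cd (2 ^ m.+1) (Fv o s t Q) (Fv o s t U) = 2 ^ m - 1.
  by rewrite FU FQ.
have bQU : U \in ball r (2 ^ m - 1) Q.
  rewrite EQ EU; apply: (@path_fwd _ o s t m.+1 Ht Hst (2 ^ m - 1) (2 ^ m) N2).
have eQU := ball_exact Ht Hst cQU bQU.
have cUQ : cd (2 ^ m.+1) (Fv o s t U) (Fv o s t Q) = 2 ^ m - 1.
  by rewrite FU FQ.
have bUQ : Q \in ball r (2 ^ m - 1) U.
  rewrite EU EQ; apply: (@path_bwd _ o s t m.+1 Ht Hst (2 ^ m - 1) (2 ^ m) N2).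
have eUQ := ball_exact Ht Hst cUQ bUQ.
have Conn : forall x w, w \in ball r #|{: m.+1.-tuple V}| x.
  move=> x w; apply: connect_ball; exact: conn_n.
have [A1 A2] : ncloser r U W = #|S| /\ ncloser r W U = #|~: S|.
  apply: (@cross_ncloser _ r S U W P Q) => // j.
  - by rewrite eWP eUQ.
  - by rewrite eWP eUQ.
have [A3 A4] : ncloser r P Q = #|~: S| /\ ncloser r Q P = #|~: ~: S|.
  apply: (@cross_ncloser _ r (~: S) P Q U W) => //.
  - by rewrite in_setC.
  - by rewrite in_setC negbK.
  - move=> x w H; rewrite !in_setC ?negbK => Hx Hw.
    have [[E1 E2]|[E1 E2]] := Hc2 x w H Hx Hw; [by right | by left].
  - move=> x w H; rewrite !in_setC ?negbK => Hx Hw.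
    have [[E1 E2]|[E1 E2]] := Hc1 x w H Hx Hw; [by right | by left].
  - move=> j; by rewrite eQU ePW.
  - move=> j; by rewrite eQU ePW.
rewrite setCK in A4.
by split.
Qed.


Lemma final_arith (k a b K X Y : nat) :
  a + b = k -> X = a * K -> Y = b * K ->
  X * Y = a * b * (K * K) /\
  a * b * (K * K) = a * K * (k * K - a * K) /\
  a * K * (k * K - a * K) = b * K * (k * K - b * K).
Proof.
move=> Hk -> ->.
have E1 : k * K - a * K = b * K by rewrite -Hk mulnDl addKn.
have E2 : k * K - b * K = a * K by rewrite -Hk mulnDl addnK.
rewrite E1 E2; split; [|split].
- by rewrite mulnACA.
- by rewrite mulnACA.
- by rewrite mulnC.
Qed.

Theorem lemma5p5 (V : finType) (o : rel V) (n : nat) (s t : V)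
  (u v : n.-tuple V) :
  oriented_tree o -> 1 <= n -> o s t ->
  ((val u = nseq n s /\ val v = nseq n t) \/
   (val u = rcons (nseq n.-1 s) t /\ val v = rcons (nseq n.-1 t) s)) ->
  let k := #|V| in
  let a := ncloser (undir o) s t in
  let b := ncloser (undir o) t s in
  ncloser (schreier_adj o n) u v * ncloser (schreier_adj o n) v u
    = a * b * k ^ (2 * (n - 1)) /\
  a * b * k ^ (2 * (n - 1)) = a * k ^ (n - 1) * (k ^ n - a * k ^ (n - 1)) /\
  a * k ^ (n - 1) * (k ^ n - a * k ^ (n - 1))
    = b * k ^ (n - 1) * (k ^ n - b * k ^ (n - 1)).
Proof.
case: n u v => [|m] u v Ht Hn Hst Huv k a b; first by [].
have [Ga0 Gb0] := G_part Ht Hst.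
have Ga : a = #|SG o s t| by exact: Ga0.
have Gb : b = #|~: SG o s t| by exact: Gb0.
have Hab : a + b = k by rewrite Ga Gb cardsC.
have [A1 A2 A3 A4] := main_n m Ht Hst.
set S := Sn o m s t in A1 A2 A3 A4.
have CS : #|S| = a * k ^ m by rewrite /S /Sn card_last Ga.
have CSC : #|~: S| = b * k ^ m.
  have := cardsC S; rewrite card_tuple CS -/k expnS.
  set K := k ^ m. rewrite -Hab mulnDl => H.
  by apply/eqP; rewrite -(eqn_add2l (a * K)) H.
have -> : m.+1 - 1 = m by rewrite subn1.
rewrite (_ : k ^ (2 * m) = k ^ m * k ^ m); last by rewrite mul2n -addnn expnD.
rewrite expnS.
have Hprod : ncloser (schreier_adj o m.+1) u v * ncloser (schreier_adj o m.+1) v u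
             = #|S| * #|~: S|.
  case: Huv => [[Eu Ev]|[Eu Ev]].
  - have -> : u = Ut m s by apply: val_inj.
    have -> : v = Ut m t by apply: val_inj.
    by rewrite A1 A2.
  - have -> : u = Pt m s t by apply: val_inj.
    have -> : v = Pt m t s by apply: val_inj.
    by rewrite A3 A4 mulnC.
rewrite Hprod.
exact: final_arith Hab CS CSC.
Qed.
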